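(* Let $\{p^\circ_{(R,\alpha)}\}_{(R,\alpha)}$ be a replacement rule satisfying the Fixation Axiom and representing neutral drift, and consider the evolutionary Markov chain with $u=0$. Then for every state $\mathbf{x}\in\{0,1\}^G$, $$\lim_{t\to\infty}P^{(t)}_{\mathbf{x}\to\mathbf{A}}=\hat x.$$ In particular, for each $g\in G$, $\lim_{t\to\infty}P^{(t)}_{\mathbf{1}_{\{g\}}\to\mathbf{A}}=v_g/n$, and $\rho_A=\rho_a=\dfrac{\hat b^\circ}{n\,b^\circ}$.
   Context: Setting. $G$ is a finite nonempty set of genetic sites, $n=|G|$. A state is $\mathbf{x}\in\{0,1\}^G$ ($x_g=1$: allele $A$ at $g$; $0$: allele $a$). For $S\subseteq G$, $\mathbf{1}_S$ has $x_g=1$ iff $g\in S$; $\mathbf{a}=\mathbf{1}_\emptyset$, $\mathbf{A}=\mathbf{1}_G$. A replacement event is $(R,\alpha)$ with $R\subseteq G$, $\alpha:R\to G$. A replacement rule representing neutral drift is a single probability distribution $\{p^\circ_{(R,\alpha)}\}$ over events, used in every state. The evolutionary Markov chain with $u=0$ moves from $\mathbf{x}$ by drawing $(R,\alpha)$ with probability $p^\circ_{(R,\alpha)}$ and setting $x'_g=x_{\alpha(g)}$ for $g\in R$, $x'_g=x_g$ for $g\notin R$; $P^{(t)}_{\mathbf{x}\to\mathbf{y}}$ are $t$-step transition probabilities. Fixation Axiom: there exist $g\in G$, $m\ge1$, events $(R_k,\alpha_k)_{k=1}^m$ with $p^\circ_{(R_k,\alpha_k)}>0$, $g\in R_k$ for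 some $k$, and $\tilde\alpha_1\circ\cdots\circ\tilde\alpha_m(h)=g$ for all $h$, where $\tilde\alpha_k$ equals $\alpha_k$ on $R_k$ and the identity elsewhere. Quantities: $e^\circ_{gh}=\sum_{(R,\alpha):h\in R,\alpha(h)=g}p^\circ_{(R,\alpha)}$, $d^\circ_g=\sum_he^\circ_{hg}$, $b^\circ=\sum_{g,h}e^\circ_{gh}$. Reproductive values $(v_g)$: the unique solution of $d^\circ_gv_g=\sum_he^\circ_{gh}v_h$ for all $g$ and $\sum_gv_g=n$. $\hat x=\frac1n\sum_gv_gx_g$, $\hat b^\circ=\sum_{g,h}e^\circ_{gh}v_h$. Mutant appearance distributions: $\mu_A(\mathbf{1}_{\{g\}})=d^\circ_g/b^\circ$ (zero on other states), $\mu_a(\mathbf{1}_{G\setminus\{g\}})=d^\circ_g/b^\circ$ (zero elsewhere); $\rho_A=\sum_\mathbf{x}\mu_A(\mathbf{x})\lim_tP^{(t)}_{\mathbf{x}\to\mathbf{A}}$, $\rho_a=\sum_\mathbf{x}\mu_a(\mathbf{x})\lim_tP^{(t)}_{\mathbf{x}\to\mathbf{a}}$. *)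

(* Defs.v *)
From HB Require Import structures.
From mathcomp Require Import all_boot all_order all_algebra.
From mathcomp Require Import all_classical all_reals all_analysis.
Set Implicit Arguments. Unset Strict Implicit. Unset Printing Implicit Defensive.
Import Order.TTheory GRing.Theory Num.Theory.
Import numFieldTopology.Exports numFieldNormedType.Exports.
Local Open Scope ring_scope.
Local Open Scope classical_set_scope.
Local Open Scope ring_scope.

Section Evo.
Variables (R : realType) (G : finType).

(* A state x in {0,1}^G: x g = true means allele A at site g. *)
Definition state := {ffun G -> bool}.

(* A replacement event (R, alpha) with R ⊆ G, alpha : R -> G is encoded as
   e : G -> option G, with R = {g | e g <> None} and alpha g = h iff e g = Some h. *)
Definition event := {ffun G -> option G}.

Definition step (e : event) (x : state) : state :=
  [ffun g => match e g with Some h => x h | None => x g end].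

Definition ind (S : {set G}) : state := [ffun g => g \in S].
Definition allA : state := ind [set: G]%SET.
Definition alla : state := ind (@finset.set0 G).

Variable p : event -> R.

Definition P1 (x y : state) : R := \sum_(e : event | step e x == y) p e.

Fixpoint Pt (t : nat) (x y : state) : R :=
  match t with
  | 0 => (x == y)%:R
  | t'.+1 => \sum_(z : state) P1 x z * Pt t' z y
  end.

Definition etilde (e : event) (h : G) : G :=
  match e h with Some j => j | None => h end.

Definition fixation_axiom : Prop :=
  exists (g : G) (s : seq event),
    [/\ (0 < size s)%N,
        all (fun e : event => 0 < p e) s,
        has (fun e : event => e g != None) s &
        forall h, foldr (fun (e : event) (f : G -> G) => etilde e \o f) id s h = g].

Definition emat (g h : G) : R := \sum_(e : event | e h == Some g) p e.
Definition dval (g : G) : R := \sum_(h : G) emat h g.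
Definition btot : R := \sum_(g : G) \sum_(h : G) emat g h.

Definition is_repro (v : G -> R) : Prop :=
  (forall g, dval g * v g = \sum_(h : G) emat g h * v h) /\
  \sum_(g : G) v g = #|G|%:R.

Definition xhat (v : G -> R) (x : state) : R :=
  #|G|%:R^-1 * \sum_(g : G) v g * (x g)%:R.
Definition bhat (v : G -> R) : R := \sum_(g : G) \sum_(h : G) emat g h * v h.

Definition muA (x : state) : R :=
  \sum_(g : G) (x == ind [set g]%SET)%:R * (dval g / btot).
Definition mua (x : state) : R :=
  \sum_(g : G) (x == ind (~: [set g]%SET))%:R * (dval g / btot).

Definition rhoA : R :=
  \sum_(x : state) muA x * lim ((fun t => Pt t x allA) @ \oo).
Definition rhoa : R :=
  \sum_(x : state) mua x * lim ((fun t => Pt t x alla) @ \oo).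

End Evo.

(* Main.v *)
Require Import Defs.
From HB Require Import structures.
From mathcomp Require Import all_boot all_order all_algebra.
From mathcomp Require Import all_classical all_reals all_analysis.
From mathcomp Require Import ring lra zify.
Import Order.TTheory GRing.Theory Num.Theory.
Import numFieldTopology.Exports numFieldNormedType.Exports.
Local Open Scope ring_scope.
Local Open Scope classical_set_scope.
Local Open Scope ring_scope.

Section Proofs.
Variables (R : realType) (G : finType) (p : event G -> R).
Hypothesis p0 : forall e, 0 <= p e.
Hypothesis psum : \sum_(e : event G) p e = 1.

Lemma P1_expect (x : state G) (f : state G -> R) :
  \sum_(z : state G) P1 p x z * f z = \sum_(e : event G) p e * f (step e x).
Proof.
rewrite /P1.
under eq_bigr do rewrite big_distrl /=.
rewrite (exchange_big_dep predT) //=.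
apply: eq_bigr => e _.
by rewrite (big_pred1 (step e x)) // => z; rewrite eq_sym.
Qed.

Lemma P1_ge0 x y : 0 <= P1 p x y.
Proof. by apply: sumr_ge0 => e _; apply: p0. Qed.

Lemma Pt_ge0 t x y : 0 <= Pt p t x y.
Proof.
elim: t x => [|t IH] x /=; first by rewrite ler0n.
by apply: sumr_ge0 => z _; apply: mulr_ge0; [apply: P1_ge0|apply: IH].
Qed.

Lemma Pt_iter (f : nat -> state G -> R) :
  (forall n x, f n.+1 x = \sum_(z : state G) P1 p x z * f n z) ->
  forall t s x, f (s + t)%N x = \sum_(z : state G) Pt p s x z * f t z.
Proof.
move=> Hf t s; elim: s => [|s IH] x /=.
  rewrite add0n (bigD1 x) //= eqxx mul1r big1 ?addr0 // => z /negbTE.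
  by rewrite eq_sym => ->; rewrite mul0r.
rewrite addSn Hf.
under eq_bigr do rewrite IH big_distrr /=.
rewrite exchange_big /=; apply: eq_bigr => z _.
by rewrite big_distrl /=; apply: eq_bigr => w _; rewrite mulrA.
Qed.

Lemma P1_mass x : \sum_(z : state G) P1 p x z = 1.
Proof.
have := P1_expect x (fun _ => 1).
under eq_bigr do rewrite mulr1.
under [X in _ = X -> _]eq_bigr do rewrite mulr1.
by rewrite psum.
Qed.

Lemma Pt_mass t x : \sum_(y : state G) Pt p t x y = 1.
Proof.
have H : forall n z, (fun _ _ => 1) n.+1 z = \sum_(w : state G) P1 p z w * (fun _ _ => 1 : R) n w.
  by move=> n z /=; under eq_bigr do rewrite mulr1; rewrite P1_mass.
have /= E := @Pt_iter (fun _ _ => 1) H 0%N t x.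
by rewrite [RHS]E; apply: eq_bigr => y _; rewrite mulr1.
Qed.


Lemma step_allA e : step e (allA G) = allA G.
Proof. by apply/ffunP => g; rewrite /step /allA /alla /ind !ffunE; case: (e g) => *; rewrite ?ffunE ?inE. Qed.

Lemma step_alla e : step e (alla G) = alla G.
Proof. by apply/ffunP => g; rewrite /step /allA /alla /ind !ffunE; case: (e g) => *; rewrite ?ffunE ?inE. Qed.

Lemma Pt_absorb a t y : (forall e, step e a = a) -> Pt p t a y = (a == y)%:R.
Proof.
move=> Ha; elim: t => [|t IH] //=.
rewrite (P1_expect a (fun z => Pt p t z y)).
under eq_bigr do rewrite Ha IH.
by rewrite -big_distrl /= psum mul1r.
Qed.

Lemma Pt_S t x y : Pt p t.+1 x y = \sum_(z : state G) P1 p x z * Pt p t z y.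
Proof. by []. Qed.

Definition trans (y : state G) := (y != allA G) && (y != alla G).

Definition q t x := \sum_(y | trans y) Pt p t x y.

Lemma q_rec n x : q n.+1 x = \sum_(z : state G) P1 p x z * q n z.
Proof.
rewrite /q; under eq_bigr do rewrite Pt_S.
rewrite exchange_big /=; apply: eq_bigr => z _.
by rewrite big_distrr.
Qed.

Lemma split3 (F : state G -> R) : allA G != alla G ->
  \sum_(y : state G) F y = F (allA G) + F (alla G) + \sum_(y | trans y) F y.
Proof.
move=> neq; rewrite (bigD1 (allA G)) //= (bigD1 (alla G)) /=; last by rewrite eq_sym.
by rewrite addrA.
Qed.

Lemma q_abs t : q t (allA G) = 0 /\ q t (alla G) = 0.
Proof.
split; rewrite /q big1 // => y /andP[h1 h2]; rewrite Pt_absorb;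
  try (by move=> e; rewrite ?step_allA ?step_alla);
  by rewrite eq_sym ?(negbTE h1) ?(negbTE h2).
Qed.

Fixpoint run (s : seq (event G)) (x : state G) : state G :=
  match s with [::] => x | e :: s' => run s' (step e x) end.

Lemma run_eq s x : run s x =
  [ffun g => x (foldr (fun (e : event G) (f : G -> G) => etilde e \o f) id s g)].
Proof.
elim: s x => [|e s IH] x /=; first by apply/ffunP => g; rewrite ffunE.
rewrite IH; apply/ffunP => g; rewrite !ffunE /= /etilde.
by case: (e _).
Qed.

Lemma P1_step e x : p e <= P1 p x (step e x).
Proof.
rewrite /P1 (bigD1 e) //= lerDl; apply: sumr_ge0 => *; exact: p0.
Qed.

Lemma Pt_run s x : \prod_(e <- s) p e <= Pt p (size s) x (run s x).
Proof.
elim: s x => [|e s IH] x /=; first by rewrite big_nil eqxx.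
rewrite big_cons (bigD1 (step e x)) //=.
rewrite -[X in X <= _]addr0; apply: lerD.
  apply: ler_pM; [exact: p0| |exact: P1_step|exact: IH].
  by apply: prodr_ge0 => *; exact: p0.
by apply: sumr_ge0 => *; apply: mulr_ge0; [exact: P1_ge0|exact: Pt_ge0].
Qed.



Lemma step_val (e : event G) (x : state G) (g : G) : step e x g = x (etilde e g).
Proof. by rewrite ffunE /etilde; case: (e g). Qed.

Lemma sum_e_X (X : G -> R) g :
  \sum_(e : event G) p e * X (etilde e g) = X g + \sum_(h : G) emat p h g * (X h - X g).
Proof.
have E : forall e : event G, X (etilde e g) = X g + \sum_(h : G) (e g == Some h)%:R * (X h - X g).
  move=> e; rewrite /etilde; case: (e g) => [j|].
  - rewrite (bigD1 j) //= eqxx mul1r big1 ?addr0; first ring.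
    move=> h hj; rewrite (_ : (Some j == Some h) = false) ?mul0r //.
    by apply/negbTE; apply/eqP => -[E]; move: hj; rewrite E eqxx.
  - by rewrite big1 ?addr0 // => h _; rewrite /= mul0r.
under eq_bigr do rewrite E mulrDr.
rewrite big_split /= -big_distrl /= psum mul1r; congr (_ + _).
under eq_bigr do rewrite big_distrr /=.
rewrite exchange_big /=; apply: eq_bigr => h _.
rewrite /emat big_distrl /= [RHS]big_mkcond /=; apply: eq_bigr => e _.
by case: (e g == Some h); rewrite /= ?mul1r ?mul0r ?mulr0.
Qed.

Lemma xhat_step (v : G -> R) (x : state G) : is_repro p v ->
  \sum_(e : event G) p e * xhat v (step e x) = xhat v x.
Proof.
move=> [Hd _]; rewrite /xhat.
under eq_bigr do rewrite mulrCA.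
rewrite -big_distrr /=; congr (_ * _).
under eq_bigr do rewrite big_distrr /=.
rewrite exchange_big /=.
under eq_bigr => g _ do [under eq_bigr => e _ do rewrite step_val mulrCA;
  idtac].
under eq_bigr => g _ do rewrite -big_distrr /= (sum_e_X (fun h => (x h)%:R)) mulrDr.
rewrite big_split /= -[RHS]addr0; congr (_ + _).
set X := fun h => (x h)%:R : R.
transitivity (\sum_g \sum_h (emat p h g * v g * X h) - \sum_g \sum_h (emat p h g * v g * X g)).
  rewrite -sumrB; apply: eq_bigr => g _; rewrite -sumrB mulr_sumr; apply: eq_bigr => h _.
  rewrite /X; ring.
apply/eqP; rewrite subr_eq0; apply/eqP.
rewrite exchange_big /=; apply: eq_bigr => g _.
rewrite -!big_distrl /= -Hd /dval; ring.
Qed.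

Lemma Pt_mart (v : G -> R) t (x : state G) : is_repro p v ->
  \sum_(y : state G) Pt p t x y * xhat v y = xhat v x.
Proof.
move=> Hv.
have H : forall n z, (fun _ => xhat v) n.+1 z = \sum_(w : state G) P1 p z w * (fun _ => xhat v) n w.
  by move=> n z /=; rewrite (P1_expect z (xhat v)) xhat_step.
by have /= E := @Pt_iter (fun _ => xhat v) H 0%N t x; rewrite [RHS]E.
Qed.

Hypothesis neqAa : allA G != alla G.

Lemma q_ge0 t x : 0 <= q t x.
Proof. by apply: sumr_ge0 => *; exact: Pt_ge0. Qed.

Lemma q_eq t x : q t x = 1 - Pt p t x (allA G) - Pt p t x (alla G).
Proof. by rewrite /q -(Pt_mass t x) (split3 _ neqAa); ring. Qed.

Section Decay.
Variables (s : seq (event G)) (g0 : G).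
Hypothesis s_pos : all (fun e => 0 < p e) s.
Hypothesis s_fix : forall h, foldr (fun (e : event G) (f : G -> G) => etilde e \o f) id s h = g0.

Let m := size s.
Let d := \prod_(e <- s) p e.

Lemma run_abs x : run s x = if x g0 then allA G else alla G.
Proof.
rewrite run_eq; apply/ffunP => g; rewrite !ffunE s_fix.
by case: (x g0); rewrite /allA /alla /ind ffunE ?inE.
Qed.

Lemma q_m x : q m x <= 1 - d.
Proof.
rewrite q_eq.
have H1 := Pt_ge0 m x (allA G); have H2 := Pt_ge0 m x (alla G).
have := Pt_run s x; rewrite run_abs -/m -/d; case: (x g0) => /= H; lra.
Qed.


Lemma d_le1 : 0 <= 1 - d.
Proof. exact: le_trans (q_ge0 m (allA G)) (q_m _). Qed.

Lemma q_decay k : forall t x, (k * m <= t)%N -> q t x <= (1 - d) ^+ k.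
Proof.
elim: k => [|k IH] t x Ht.
  rewrite expr0 q_eq; have := Pt_ge0 t x (allA G); have := Pt_ge0 t x (alla G); lra.
rewrite mulSn in Ht.
have Htm : t = (m + (t - m))%N by lia.
have Hk : (k * m <= t - m)%N by lia.
rewrite Htm (@Pt_iter q q_rec) (split3 _ neqAa).
have [-> ->] := q_abs (t - m); rewrite !mulr0 !add0r.
apply: le_trans (_ : \sum_(z | trans z) Pt p m x z * (1 - d) ^+ k <= _).
  by apply: ler_sum => z _; apply: ler_wpM2l; [exact: Pt_ge0|exact: IH].
rewrite -big_distrl /= -/(q m x) exprS.
apply: ler_wpM2r; [exact: exprn_ge0 d_le1|exact: q_m].
Qed.


Hypothesis m_gt0 : (0 < m)%N.

Lemma d_gt0 : 0 < d.
Proof.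
rewrite /d; move: s_pos; elim: (s) => [|e s' IH]; first by rewrite big_nil.
by rewrite big_cons /= => /andP[He Hs]; apply: mulr_gt0 => //; apply: IH.
Qed.

Lemma div_cvg : (fun t => (t %/ m)%N) @ \oo --> \oo.
Proof.
apply/cvgnyPge => A; near=> t; rewrite leq_divRL //.
near: t; exact: nbhs_infty_ge.
Unshelve. all: end_near. Qed.

Lemma q_cvg x : (fun t => q t x) @ \oo --> 0.
Proof.
apply: (@squeeze_cvgr _ _ _ _ (cst 0) ((GRing.exp (1 - d) : R ^nat) \o (fun t => (t %/ m)%N))).
- near=> t; rewrite q_ge0 /=; apply: q_decay; exact: leq_trunc_div.
- exact: cvg_cst.
- apply: (cvg_comp _ _ div_cvg); apply: cvg_expr.
  rewrite ger0_norm; last exact: d_le1.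
  have := d_gt0; lra.
Unshelve. all: end_near. Qed.

End Decay.


Lemma xhatA (v : G -> R) : (0 < #|G|)%N -> is_repro p v -> xhat v (allA G) = 1.
Proof.
move=> G0 [_ Hs]; rewrite /xhat.
under eq_bigr do rewrite /allA /ind ffunE inE mulr1.
by rewrite Hs mulVf // pnatr_eq0 -lt0n.
Qed.

Lemma xhata (v : G -> R) : xhat v (alla G) = 0.
Proof.
rewrite /xhat big1 ?mulr0 // => g _.
by rewrite /alla /ind ffunE inE mulr0.
Qed.

Section Main.
Variables (s : seq (event G)) (g0 : G).
Hypothesis s_pos : all (fun e => 0 < p e) s.
Hypothesis s_fix : forall h, foldr (fun (e : event G) (f : G -> G) => etilde e \o f) id s h = g0.
Hypothesis m_gt0 : (0 < size s)%N.
Hypothesis G0 : (0 < #|G|)%N.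
Variable v : G -> R.
Hypothesis Hv : is_repro p v.

Lemma Pt_to0 x y : trans y -> (fun t => Pt p t x y) @ \oo --> 0.
Proof.
move=> Ty.
apply: (@squeeze_cvgr _ _ _ _ (cst 0) (fun t => q t x)).
- near=> t; rewrite Pt_ge0 /= /q (bigD1 y) //= lerDl.
  by apply: sumr_ge0 => *; exact: Pt_ge0.
- exact: cvg_cst.
- exact: (@q_cvg s g0 s_pos s_fix m_gt0).
Unshelve. all: end_near. Qed.

Lemma S_to0 x : (fun t => \sum_(y | trans y) Pt p t x y * xhat v y) @ \oo --> 0.
Proof.
have := @cvg_big R (state G) +%R 0 trans add_continuous nat \oo (index_enum (state G))
  (fun y t => Pt p t x y * xhat v y) (fun _ => 0) _.
rewrite big1 //; apply => y Ty.
rewrite -(mul0r (xhat v y)); apply: cvgMl; exact: Pt_to0.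
Qed.

Lemma limA x : (fun t => Pt p t x (allA G)) @ \oo --> xhat v x.
Proof.
have E t : Pt p t x (allA G) = xhat v x - \sum_(y | trans y) Pt p t x y * xhat v y.
  rewrite -{1}(Pt_mart v t x Hv) (split3 _ neqAa) xhatA // xhata mulr1 mulr0 addr0.
  by rewrite addrK.
rewrite (_ : (fun t => _) = (fun t => xhat v x - \sum_(y | trans y) Pt p t x y * xhat v y)); last first.
  by apply: funext => t; rewrite E.
rewrite -[X in _ --> X]subr0; apply: cvgB; [exact: cvg_cst|exact: S_to0].
Qed.

Lemma lima x : (fun t => Pt p t x (alla G)) @ \oo --> 1 - xhat v x.
Proof.
rewrite (_ : (fun t => _) = (fun t => 1 - Pt p t x (allA G) - q t x)); last first.
  by apply: funext => t; rewrite q_eq; ring.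
rewrite -[X in _ --> X]subr0; apply: cvgB; last exact: (@q_cvg s g0 s_pos s_fix m_gt0).
apply: cvgB; [exact: cvg_cst|exact: limA].
Qed.

End Main.

End Proofs.

Lemma sum_pick (R : realType) (T : finType) (a : T) (F : T -> R) :
  \sum_(x : T) (x == a)%:R * F x = F a.
Proof.
rewrite (bigD1 a) //= eqxx mul1r big1 ?addr0 // => y /negbTE ->.
by rewrite mul0r.
Qed.

Theorem theorem7 (R : realType) (G : finType) (p : event G -> R) (v : G -> R) :
  (0 < #|G|)%N ->
  (forall e, 0 <= p e) ->
  \sum_(e : event G) p e = 1 ->
  fixation_axiom p ->
  is_repro p v ->
  [/\ (forall x : state G,
         (fun t => Pt p t x (allA G)) @ \oo --> xhat v x),
      (forall g : G,
         (fun t => Pt p t (ind [set g]%SET) (allA G)) @ \oo --> v g / #|G|%:R),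
      rhoA p = bhat p v / (#|G|%:R * btot p) &
      rhoa p = bhat p v / (#|G|%:R * btot p)].
Proof.
move=> G0 p0 psum [g0 [s [m_gt0 s_pos _ s_fix]]] Hv.
have neq : allA G != alla G.
  case/card_gt0P: G0 => g _; apply/eqP => E.
  by have := congr1 (fun f : state G => f g) E; rewrite /allA /alla /ind !ffunE !inE.
have LA := @limA R G p p0 psum neq s g0 s_pos s_fix m_gt0 G0 v Hv.
have La := @lima R G p p0 psum neq s g0 s_pos s_fix m_gt0 G0 v Hv.
have nz : (#|G|%:R : R) != 0 by rewrite pnatr_eq0 -lt0n.
have Hsing g : xhat v (ind [set g]) = v g / #|G|%:R.
  rewrite /xhat mulrC; congr (_ * _).
  rewrite (bigD1 g) //= big1 ?addr0; first by rewrite /ind ffunE inE eqxx mulr1.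
  by move=> h /negbTE hg; rewrite /ind ffunE inE hg mulr0.
have Hco g : 1 - xhat v (ind (~: [set g])) = v g / #|G|%:R.
  case: Hv => _ Hs.
  have E : \sum_h v h * (ind (~: [set g]) h)%:R = #|G|%:R - v g.
    rewrite -Hs (bigD1 g) //= [in RHS](bigD1 g) //= /ind ffunE !inE eqxx mulr0 add0r.
    rewrite addrC addrK; apply: eq_bigr => h hg.
    by rewrite ffunE !inE (negbTE hg) mulr1.
  rewrite /xhat E; field.
  exact: nz.
have Hd := Hv.1.
have Hb : \sum_g dval p g * v g = bhat p v.
  by rewrite /bhat; apply: eq_bigr => g _; rewrite Hd.
split => //.
- by move=> g; rewrite -Hsing; apply: LA.
- rewrite /rhoA.
  under eq_bigr => x _ do rewrite (cvg_lim (@Rhausdorff R) (LA x)).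
  rewrite /muA.
  under eq_bigr do rewrite mulr_suml.
  rewrite exchange_big /=.
  under eq_bigr => g _ do (under eq_bigr => x _ do rewrite -mulrA; rewrite sum_pick Hsing).
  rewrite -Hb mulr_suml; apply: eq_bigr => g _.
  rewrite invfM; ring.
- rewrite /rhoa.
  under eq_bigr => x _ do rewrite (cvg_lim (@Rhausdorff R) (La x)).
  rewrite /mua.
  under eq_bigr do rewrite mulr_suml.
  rewrite exchange_big /=.
  under eq_bigr => g _ do (under eq_bigr => x _ do rewrite -mulrA; rewrite sum_pick Hco).
  rewrite -Hb mulr_suml; apply: eq_bigr => g _.
  rewrite invfM; ring.
Qed.
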